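(* Let $n\ge 3$. The square of the cycle, $C_n^2$, is odd prime if and only if $n\not\equiv 2 \pmod 3$.
   Context: All graphs are finite and simple. A graph $G$ of order $N$ is odd prime if there is a bijection $\ell:V(G)\to\{1,3,\ldots,2N-1\}$ with $\gcd(\ell(u),\ell(v))=1$ for every edge $uv$. For a graph $G$ and $k\ge 1$, the power $G^k$ has vertex set $V(G)$, with $u\ne v$ adjacent iff their distance in $G$ is at most $k$. $C_n$ is the cycle on $n$ vertices. *)

(* Defs.v *)
From mathcomp Require Import all_boot.
Set Implicit Arguments. Unset Strict Implicit. Unset Printing Implicit Defensive.

(* A finite simple graph: vertex type T : finType, adjacency e : rel T,
   assumed symmetric and irreflexive where relevant. *)

Definition walk_le (T : finType) (e : rel T) (k : nat) (u v : T) : Prop :=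
  exists p : seq T, size p <= k /\ path e u p /\ last u p = v.

Definition graph_power (T : finType) (e : rel T) (k : nat) (u v : T) : Prop :=
  u <> v /\ walk_le e k u v.

Definition cycle_adj (n : nat) : rel 'I_n :=
  fun i j => (j == (i.+1 %% n) :> nat) || (i == (j.+1 %% n) :> nat).

(* Odd prime labeling: bijection l : V -> {1,3,...,2N-1}, coprime on edges. *)
Definition odd_prime (T : finType) (adj : T -> T -> Prop) : Prop :=
  exists l : T -> nat,
    injective l /\
    (forall x, odd (l x) /\ l x < 2 * #|T|) /\
    (forall u v, adj u v -> coprime (l u) (l v)).

(* Main.v *)
Require Import Defs.
From mathcomp Require Import all_boot.
From mathcomp Require Import zify.

Lemma half_odd k : odd k -> k = 2 * k./2 + 1.
Proof. move=> Hk; have := odd_double_half k; rewrite Hk -muln2; lia. Qed.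
Arguments half_odd {k}.

Lemma cop2 a : odd a -> coprime a (a + 2).
Proof. by move=> Ha; rewrite /coprime gcdnDl -/(coprime a 2) coprimen2. Qed.

Lemma cop4 a : odd a -> coprime a (a + 4).
Proof.
move=> Ha; rewrite /coprime gcdnDl -/(coprime a 4).
by rewrite (_ : 4 = 2 * 2) // coprimeMr coprimen2 Ha.
Qed.

Lemma no_cop3 a b : coprime a b -> 3 %| a -> 3 %| b -> False.
Proof.
move=> /eqP H Ha Hb; have : 3 %| gcdn a b by rewrite dvdn_gcd Ha Hb.
by rewrite H.
Qed.

Lemma modD_cases n a d : a < n -> d <= n ->
  ((a + d) %% n = a + d /\ a + d < n) \/ ((a + d) %% n = a + d - n /\ n <= a + d).
Proof.
move=> Ha Hd; case: (ltnP (a + d) n) => H.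
  by left; rewrite modn_small.
right; split => //.
rewrite -{1}(subnK H) modnDr modn_small //; lia.
Qed.

Arguments modD_cases {n a d}.

Arguments no_cop3 {a b}.

Definition stp n a b := b = a + 1 \/ (a + 1 = n /\ b = 0).
Definition stp2 n a c := c = a + 2 \/ (a + 1 = n /\ c = 1) \/ (a + 2 = n /\ c = 0).

Lemma near n X Y a b : 3 <= n -> X < n -> Y < n -> a < 3 -> b < 3 ->
  (X + a = Y + b \/ X + a = Y + b + n \/ X + a + n = Y + b) ->
  (X = Y /\ a = b) \/ stp n X Y \/ stp n Y X \/ stp2 n X Y \/ stp2 n Y X.
Proof.
rewrite /stp /stp2 => Hn HX HY Ha Hb.
case: a Ha => [|[|[|a]]] // _; case: b Hb => [|[|[|b]]] // _; case=> E; lia.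
Qed.

Lemma stp_nat n a b : a < n -> b = (a + 1) %% n -> stp n a b.
Proof.
rewrite /stp => Ha ->; have H1 : 1 <= n by lia.
have := modD_cases Ha H1; lia.
Qed.

Lemma stp_mod n a b : a < n -> b < n -> stp n a b -> b = (a + 1) %% n.
Proof.
move=> Ha Hb Hs; have H1 : 1 <= n by lia.
have := modD_cases Ha H1; rewrite /stp in Hs; lia.
Qed.

Lemma adj_nat n (x y : 'I_n) : cycle_adj x y -> stp n x y \/ stp n y x.
Proof.
have := ltn_ord x; have := ltn_ord y.
move=> Hx Hy /orP [/eqP H|/eqP H]; rewrite -addn1 in H.
  by left; apply: stp_nat.
by right; apply: stp_nat.
Qed.

Lemma nat_adj n (x y : 'I_n) : stp n x y -> cycle_adj x y.
Proof.
move=> Hs; apply/orP; left; apply/eqP; rewrite -addn1.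
by apply: stp_mod.
Qed.

Lemma walk_cases n (u v : 'I_n) : 3 <= n -> graph_power (@cycle_adj n) 2 u v ->
  [/\ nat_of_ord u <> nat_of_ord v & (stp n u v \/ stp n v u \/ stp2 n u v \/ stp2 n v u)].
Proof.
move=> Hn [Huv [p [Hs [Hp Hl]]]].
have Nuv : nat_of_ord u <> nat_of_ord v by move=> E; apply: Huv; apply: val_inj.
split => //.
case: p Hs Hp Hl => [|a [|b [|c p]]] //= Hs.
- rewrite andbT => /adj_nat H E; subst; tauto.
- move=> /andP [/adj_nat H1 /andP [/adj_nat H2 _]] E; subst.
  have := ltn_ord u; have := ltn_ord a; have := ltn_ord v.
  move: H1 H2 Nuv; rewrite /stp /stp2; lia.
Qed.

Lemma adj_step n (u v : 'I_n) : 3 <= n ->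
  (stp n u v \/ stp2 n u v) -> graph_power (@cycle_adj n) 2 u v.
Proof.
move=> Hn Hd; have Hu := ltn_ord u; have Hv := ltn_ord v.
split.
  move=> E; subst; move: Hd; rewrite /stp /stp2; lia.
case: Hd => Hd.
  exists [:: v]; split => //=; split => //; rewrite andbT.
  exact: nat_adj.
have Hw : (u + 1) %% n < n by apply: ltn_pmod; lia.
exists [:: Ordinal Hw; v]; split => //=; split => //.
have H1 : stp n u (Ordinal Hw) by apply: stp_nat.
rewrite andbT; apply/andP; split; apply: nat_adj => //.
move: H1 Hd; rewrite /stp /stp2 /=; lia.
Qed.

Arguments adj_step {n u v}.
Arguments walk_cases {n u v}.

Theorem theorem5p2 (n : nat) : 3 <= n ->
  (odd_prime (graph_power (@cycle_adj n) 2) <-> n %% 3 != 2).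
Proof.
move=> Hn; split.
- move=> [l [Hinj [Hr Hc]]]; apply/negP => /eqP H3.
  set m := n %/ 3.
  have Hnm : n = 3 * m + 2 by rewrite /m; lia.
  have Hf : forall x, (l x)./2 < n.
    by move=> x; rewrite ltn_half_double; case: (Hr x) => _; rewrite card_ord -muln2; lia.
  pose f x := Ordinal (Hf x).
  have finj : injective f.
    move=> x y /(congr1 val) /= E; apply: Hinj.
    case: (Hr x) => ox _; case: (Hr y) => oy _.
    by rewrite (half_odd ox) (half_odd oy) E.
  have Hy : forall k : 'I_(m.+1), 3 * k + 1 < n.
    by move=> k; have := ltn_ord k; lia.
  pose x (k : 'I_(m.+1)) := invF finj (Ordinal (Hy k)).
  have Hlx : forall k, l (x k) = 3 * (2 * k + 1).
    move=> k; have := f_invF finj (Ordinal (Hy k)) => /(congr1 val) /= E.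
    case: (Hr (x k)) => ox _; rewrite (half_odd ox) /x E; lia.
  have Hh : forall p : 'I_(m.+1) * 'I_3, (x p.1 + p.2) %% n < n.
    by move=> p; apply: ltn_pmod; lia.
  pose h p := Ordinal (Hh p).
  have hinj : injective h.
    move=> [k a] [k' b] /(congr1 val) /= E.
    have Ha := ltn_ord a; have Hb := ltn_ord b.
    have Hxk := ltn_ord (x k); have Hxk' := ltn_ord (x k').
    have Hdiv : forall k, 3 %| l (x k) by move=> k0; rewrite Hlx dvdn_mulr.
    have Han : a <= n by lia.
    have Hbn : b <= n by lia.
    have C1 := modD_cases Hxk Han.
    have C2 := modD_cases Hxk' Hbn.
    have : (nat_of_ord (x k) = x k' /\ nat_of_ord a = b) \/ stp n (x k) (x k') \/ stp n (x k') (x k)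
       \/ stp2 n (x k) (x k') \/ stp2 n (x k') (x k).
      apply: near => //.
      case: C1 => [[e1 l1]|[e1 l1]]; case: C2 => [[e2 l2]|[e2 l2]];
        rewrite e1 e2 in E; lia.
    case=> [[Exx Eab]|[Hs|[Hs|[Hs|Hs]]]].
    + have Exx' : x k = x k' by apply: val_inj.
      have e : nat_of_ord k = k' by move: (Hlx k) (Hlx k'); rewrite Exx'; lia.
      have Ekk : k = k' by apply: val_inj; exact: e.
      by subst k'; congr pair; apply: val_inj; exact: Eab.
    + have := Hc _ _ (adj_step Hn (or_introl Hs)) => Hco.
      by case: (no_cop3 Hco (Hdiv k) (Hdiv k')).
    + have := Hc _ _ (adj_step Hn (or_introl Hs)) => Hco.
      by case: (no_cop3 Hco (Hdiv k') (Hdiv k)).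
    + have := Hc _ _ (adj_step Hn (or_intror Hs)) => Hco.
      by case: (no_cop3 Hco (Hdiv k) (Hdiv k')).
    + have := Hc _ _ (adj_step Hn (or_intror Hs)) => Hco.
      by case: (no_cop3 Hco (Hdiv k') (Hdiv k)).
  have := leq_card h hinj; rewrite card_prod !card_ord; lia.
- move=> H3.
  exists (fun x : 'I_n => 2 * x + 1); split; [|split].
  + move=> a b E; have e : nat_of_ord a = b by lia.
    by apply: val_inj; exact: e.
  + by move=> a; rewrite card_ord; have := ltn_ord a; split; lia.
  + move=> u v /(walk_cases Hn) [Nuv Hw].
    have key1 : forall a b : nat, stp n a b -> coprime (2 * a + 1) (2 * b + 1).
      move=> a b [->|[_ ->]]; last by rewrite coprimen1.
      rewrite (_ : 2 * (a + 1) + 1 = (2 * a + 1) + 2); last lia.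
      apply: cop2; lia.
    have key2 : forall a b : nat, stp2 n a b -> coprime (2 * a + 1) (2 * b + 1).
      move=> a b [->|[[Ea ->]|[_ ->]]]; last by rewrite coprimen1.
        rewrite (_ : 2 * (a + 2) + 1 = (2 * a + 1) + 4); last lia.
        apply: cop4; lia.
      rewrite coprime_sym prime_coprime //; apply/negP => D; lia.
    case: Hw => [E|[E|[E|E]]].
    * exact: key1.
    * by rewrite coprime_sym; apply: key1.
    * exact: key2.
    * by rewrite coprime_sym; apply: key2.
Qed.
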